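(* Let $\mathcal V$ be braided monoidal closed and complete, and let $H$ be a Hopf $\mathcal V$-category with object set $X$ whose antipode is invertible. Then for every $x\in X$ there is an isomorphism $\int^r_{H,x}\cong\int^\ell_{H,x}$ in $\mathcal V$.
   Context: $\mathcal V$: braided monoidal closed category with all limits, tensor $\otimes$, unit $I$, braiding $\sigma$. A $\mathcal V$-category $A$ with object set $X$: objects $A_{x,y}$, compositions $m_{xyz}\colon A_{x,y}\otimes A_{y,z}\to A_{x,z}$, units $j_x\colon I\to A_{x,x}$, associative and unital. Semi-Hopf: each $A_{x,y}$ is a comonoid $(\delta_{xy},\epsilon_{xy})$ in $\mathcal V$ with all $m_{xyz},j_x$ comonoid morphisms. Hopf: antipode $s_{xy}\colon A_{x,y}\to A_{y,x}$ with $m_{xyx}\circ(1\otimes s_{xy})\circ\delta_{xy}=j_x\circ\epsilon_{xy}$, $m_{yxy}\circ(s_{xy}\otimes1)\circ\delta_{xy}=j_y\circ\epsilon_{xy}$; invertible if each $s_{xy}$ is an isomorphism. Left integral space: for $z\in X$, $\int^\ell_{A,z}$ is the object of $\mathcal V$ equipped with morphisms $\tau_{yz}\colon\int^\ell_{A,z}\to A_{y,z}$ ($y\in X$) satisfying $m_{xyz}\circ(1_{A_{x,y}}\otimes\tau_{yz})=\epsilon_{xy}\otimes\tau_{xz}$ for all $x,y$, universal among such: for any object $W$ with morphisms $w_y\colon W\to A_{y,z}$ satisfying $m_{xyz}\circ(1\otimes w_y)=\epsilon_{xy}\otimes w_x$ for all $x,y$ there is a unique $u\colon W\to\int^\ell_{A,z}$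 with $\tau_{yz}\circ u=w_y$ for all $y$ (it is the limit of the diagram of adjuncts of these maps under tensor-hom adjunction). Right integral space: for $x\in X$, $\int^r_{A,x}$ with morphisms $\tau_{xy}\colon\int^r_{A,x}\to A_{x,y}$ satisfying $m_{xzy}\circ(\tau_{xz}\otimes1_{A_{z,y}})=\tau_{xy}\otimes\epsilon_{zy}$ for all $z,y$, universal among such families. *)

(* Defs.v *)
Record Cat := {
  Ob :> Type;
  Hom : Ob -> Ob -> Type;
  idm : forall a, Hom a a;
  comp : forall a b c, Hom b c -> Hom a b -> Hom a c;
  comp_id_l : forall a b (f : Hom a b), comp a b b (idm b) f = f;
  comp_id_r : forall a b (f : Hom a b), comp a a b f (idm a) = f;
  comp_assoc : forall a b c d (h : Hom c d) (g : Hom b c) (f : Hom a b),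
      comp a c d h (comp a b c g f) = comp a b d (comp b c d h g) f
}.
Arguments Hom {C} a b : rename.
Arguments idm {C} a : rename.
Arguments comp {C a b c} g f : rename.

Declare Scope cat_scope.
Notation "g ∘ f" := (comp g f) (at level 40, left associativity) : cat_scope.
Open Scope cat_scope.

Record Monoidal (C : Cat) := {
  ten : C -> C -> C;
  tenf : forall a b c d, Hom a b -> Hom c d -> Hom (ten a c) (ten b d);
  tenf_id : forall a b, tenf _ _ _ _ (idm a) (idm b) = idm (ten a b);
  tenf_comp : forall a b c a' b' c' (f : Hom a b) (g : Hom b c)
      (f' : Hom a' b') (g' : Hom b' c'),
      tenf _ _ _ _ (g ∘ f) (g' ∘ f') = tenf _ _ _ _ g g' ∘ tenf _ _ _ _ f f';
  unit : C;
  assoc : forall a b c, Hom (ten (ten a b) c) (ten a (ten b c));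
  assoc_inv : forall a b c, Hom (ten a (ten b c)) (ten (ten a b) c);
  assoc_iso1 : forall a b c, assoc_inv a b c ∘ assoc a b c = idm _;
  assoc_iso2 : forall a b c, assoc a b c ∘ assoc_inv a b c = idm _;
  assoc_nat : forall a b c a' b' c' (f : Hom a a') (g : Hom b b') (h : Hom c c'),
      assoc a' b' c' ∘ tenf _ _ _ _ (tenf _ _ _ _ f g) h = tenf _ _ _ _ f (tenf _ _ _ _ g h) ∘ assoc a b c;
  lunit : forall a, Hom (ten unit a) a;
  lunit_inv : forall a, Hom a (ten unit a);
  lunit_iso1 : forall a, lunit_inv a ∘ lunit a = idm _;
  lunit_iso2 : forall a, lunit a ∘ lunit_inv a = idm _;
  lunit_nat : forall a b (f : Hom a b), f ∘ lunit a = lunit b ∘ tenf _ _ _ _ (idm unit) f;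
  runit : forall a, Hom (ten a unit) a;
  runit_inv : forall a, Hom a (ten a unit);
  runit_iso1 : forall a, runit_inv a ∘ runit a = idm _;
  runit_iso2 : forall a, runit a ∘ runit_inv a = idm _;
  runit_nat : forall a b (f : Hom a b), f ∘ runit a = runit b ∘ tenf _ _ _ _ f (idm unit);
  pentagon : forall a b c d,
      assoc a b (ten c d) ∘ assoc (ten a b) c d
      = tenf _ _ _ _ (idm a) (assoc b c d) ∘ assoc a (ten b c) d ∘ tenf _ _ _ _ (assoc a b c) (idm d);
  triangle : forall a b,
      tenf _ _ _ _ (idm a) (lunit b) ∘ assoc a unit b = tenf _ _ _ _ (runit a) (idm b)
}.
Arguments ten {C} M a b : rename.
Arguments tenf {C} M {a b c d} f g : rename.
Arguments unit {C} M : rename.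
Arguments assoc {C} M a b c : rename.
Arguments assoc_inv {C} M a b c : rename.
Arguments lunit {C} M a : rename.
Arguments lunit_inv {C} M a : rename.
Arguments runit {C} M a : rename.
Arguments runit_inv {C} M a : rename.

Record Braiding (C : Cat) (M : Monoidal C) := {
  braid : forall a b, Hom (ten M a b) (ten M b a);
  braid_inv : forall a b, Hom (ten M b a) (ten M a b);
  braid_iso1 : forall a b, braid_inv a b ∘ braid a b = idm _;
  braid_iso2 : forall a b, braid a b ∘ braid_inv a b = idm _;
  braid_nat : forall a b a' b' (f : Hom a a') (g : Hom b b'),
      tenf M g f ∘ braid a b = braid a' b' ∘ tenf M f g;
  hexagon1 : forall a b c,
      assoc M b c a ∘ braid a (ten M b c) ∘ assoc M a b c
      = tenf M (idm b) (braid a c) ∘ assoc M b a c ∘ tenf M (braid a b) (idm c);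
  hexagon2 : forall a b c,
      assoc_inv M c a b ∘ braid (ten M a b) c ∘ assoc_inv M a b c
      = tenf M (braid a c) (idm b) ∘ assoc_inv M a c b ∘ tenf M (idm a) (braid b c)
}.
Arguments braid {C M} B a b : rename.

Record Closed (C : Cat) (M : Monoidal C) := {
  ihom : C -> C -> C;
  ev : forall b c, Hom (ten M (ihom b c) b) c;
  curry : forall a b c, Hom (ten M a b) c -> Hom a (ihom b c);
  curry_ev : forall a b c (f : Hom (ten M a b) c),
      ev b c ∘ tenf M (curry a b c f) (idm b) = f;
  curry_uniq : forall a b c (f : Hom (ten M a b) c) (g : Hom a (ihom b c)),
      ev b c ∘ tenf M g (idm b) = f -> g = curry a b c f
}.

Section Comonoids.
Context {C : Cat} (M : Monoidal C) (B : Braiding C M).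

Definition is_comonoid (a : C) (d : Hom a (ten M a a)) (e : Hom a (unit M)) : Prop :=
  assoc M a a a ∘ tenf M d (idm a) ∘ d = tenf M (idm a) d ∘ d /\
  lunit M a ∘ tenf M e (idm a) ∘ d = idm a /\
  runit M a ∘ tenf M (idm a) e ∘ d = idm a.

Definition interchange (a a' b b' : C) :
    Hom (ten M (ten M a a') (ten M b b')) (ten M (ten M a b) (ten M a' b')) :=
  assoc_inv M a b (ten M a' b')
  ∘ tenf M (idm a) (assoc M b a' b')
  ∘ tenf M (idm a) (tenf M (braid B a' b) (idm b'))
  ∘ tenf M (idm a) (assoc_inv M a' b b')
  ∘ assoc M a a' (ten M b b').

Definition ten_comult (a b : C) (da : Hom a (ten M a a)) (db : Hom b (ten M b b)) :
    Hom (ten M a b) (ten M (ten M a b) (ten M a b)) :=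
  interchange a a b b ∘ tenf M da db.

Definition ten_counit (a b : C) (ea : Hom a (unit M)) (eb : Hom b (unit M)) :
    Hom (ten M a b) (unit M) :=
  lunit M (unit M) ∘ tenf M ea eb.

Definition is_comonoid_morphism (a b : C) (da : Hom a (ten M a a)) (ea : Hom a (unit M))
    (db : Hom b (ten M b b)) (eb : Hom b (unit M)) (f : Hom a b) : Prop :=
  db ∘ f = tenf M f f ∘ da /\ eb ∘ f = ea.

Definition unit_comult : Hom (unit M) (ten M (unit M) (unit M)) := lunit_inv M (unit M).
Definition unit_counit : Hom (unit M) (unit M) := idm (unit M).

End Comonoids.
Arguments ten_comult {C} M B {a b} da db.
Arguments ten_counit {C} M {a b} ea eb.
Arguments is_comonoid_morphism {C} M {a b} da ea db eb f.

Record VCat {C : Cat} (M : Monoidal C) (X : Type) := {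
  hom : X -> X -> C;
  mult : forall x y z, Hom (ten M (hom x y) (hom y z)) (hom x z);
  unt : forall x, Hom (unit M) (hom x x);
  mult_assoc : forall x y z w,
      mult x z w ∘ tenf M (mult x y z) (idm (hom z w))
      = mult x y w ∘ tenf M (idm (hom x y)) (mult y z w) ∘ assoc M _ _ _;
  unt_l : forall x y, mult x x y ∘ tenf M (unt x) (idm (hom x y)) = lunit M (hom x y);
  unt_r : forall x y, mult x y y ∘ tenf M (idm (hom x y)) (unt y) = runit M (hom x y)
}.
Arguments hom {C M X} A x y : rename.
Arguments mult {C M X} A x y z : rename.
Arguments unt {C M X} A x : rename.

Record SemiHopf {C : Cat} (M : Monoidal C) (B : Braiding C M) (X : Type) := {
  sh_cat :> VCat M X;
  comult : forall x y, Hom (hom sh_cat x y) (ten M (hom sh_cat x y) (hom sh_cat x y));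
  counit : forall x y, Hom (hom sh_cat x y) (unit M);
  comonoid_ax : forall x y, is_comonoid M (hom sh_cat x y) (comult x y) (counit x y);
  mult_comonoid_morphism : forall x y z,
      is_comonoid_morphism M
        (ten_comult M B (comult x y) (comult y z))
        (ten_counit M (counit x y) (counit y z))
        (comult x z) (counit x z) (mult sh_cat x y z);
  unt_comonoid_morphism : forall x,
      is_comonoid_morphism M (unit_comult M) (unit_counit M)
        (comult x x) (counit x x) (unt sh_cat x)
}.
Arguments comult {C M B X} H x y : rename.
Arguments counit {C M B X} H x y : rename.

Record Hopf {C : Cat} (M : Monoidal C) (B : Braiding C M) (X : Type) := {
  hopf_sh :> SemiHopf M B X;
  antipode : forall x y, Hom (hom hopf_sh x y) (hom hopf_sh y x);
  antipode_l : forall x y,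
      mult hopf_sh x y x ∘ tenf M (idm _) (antipode x y) ∘ comult hopf_sh x y
      = unt hopf_sh x ∘ counit hopf_sh x y;
  antipode_r : forall x y,
      mult hopf_sh y x y ∘ tenf M (antipode x y) (idm _) ∘ comult hopf_sh x y
      = unt hopf_sh y ∘ counit hopf_sh x y
}.
Arguments antipode {C M B X} H x y : rename.

Definition is_iso {C : Cat} {a b : C} (f : Hom a b) : Prop :=
  exists g : Hom b a, g ∘ f = idm a /\ f ∘ g = idm b.

Definition invertible_antipode {C : Cat} {M : Monoidal C} {B : Braiding C M} {X : Type}
    (H : Hopf M B X) : Prop :=
  forall x y, is_iso (antipode H x y).

Section Integrals.
Context {C : Cat} {M : Monoidal C} {B : Braiding C M} {X : Type} (H : SemiHopf M B X).

Definition left_integral_cone (z : X) (W : C) (w : forall y, Hom W (hom H y z)) : Prop :=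
  forall x y,
    mult H x y z ∘ tenf M (idm (hom H x y)) (w y)
    = lunit M (hom H x z) ∘ tenf M (counit H x y) (w x).

Definition is_left_integral_space (z : X) (L : C) (tau : forall y, Hom L (hom H y z)) : Prop :=
  left_integral_cone z L tau /\
  forall (W : C) (w : forall y, Hom W (hom H y z)), left_integral_cone z W w ->
    exists u : Hom W L, (forall y, tau y ∘ u = w y) /\
      forall u' : Hom W L, (forall y, tau y ∘ u' = w y) -> u' = u.

Definition right_integral_cone (x : X) (W : C) (w : forall y, Hom W (hom H x y)) : Prop :=
  forall z y,
    mult H x z y ∘ tenf M (w z) (idm (hom H z y))
    = runit M (hom H x y) ∘ tenf M (w y) (counit H z y).

Definition is_right_integral_space (x : X) (R : C) (tau : forall y, Hom R (hom H x y)) : Prop :=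
  right_integral_cone x R tau /\
  forall (W : C) (w : forall y, Hom W (hom H x y)), right_integral_cone x W w ->
    exists u : Hom W R, (forall y, tau y ∘ u = w y) /\
      forall u' : Hom W R, (forall y, tau y ∘ u' = w y) -> u' = u.

End Integrals.

Definition isomorphic {C : Cat} (a b : C) : Prop :=
  exists (f : Hom a b) (g : Hom b a), g ∘ f = idm a /\ f ∘ g = idm b.

(* Main.v *)
Require Import Defs.
From Stdlib Require Import IndefiniteDescription.

Section Base.
Context {V : Cat} {M : Monoidal V}.

Local Notation "f ⊗ g" := (tenf M f g) (at level 35).
Local Notation "1" := (idm _) : cat_scope.

Lemma cA {a b c d : V} (h : Hom c d) (g : Hom b c) (f : Hom a b) : h ∘ (g ∘ f) = h ∘ g ∘ f.
Proof. apply comp_assoc. Qed.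
Lemma cl {a b : V} (f : Hom a b) : idm b ∘ f = f.
Proof. apply comp_id_l. Qed.
Lemma cr {a b : V} (f : Hom a b) : f ∘ idm a = f.
Proof. apply comp_id_r. Qed.

Lemma L2 {a b c d : V} (X : Hom c d) (g : Hom b c) (f : Hom a b) (k : Hom a c) :
  g ∘ f = k -> X ∘ g ∘ f = X ∘ k.
Proof. intros E; rewrite <- comp_assoc, E; reflexivity. Qed.
Lemma L3 {a b c d e : V} (X : Hom d e) (h : Hom c d) (g : Hom b c) (f : Hom a b) (k : Hom a d) :
  h ∘ g ∘ f = k -> X ∘ h ∘ g ∘ f = X ∘ k.
Proof. intros E; rewrite <- !comp_assoc, <- E, !comp_assoc; reflexivity. Qed.
Lemma L4 {a b c d e z : V} (X : Hom e z) (i : Hom d e) (h : Hom c d) (g : Hom b c) (f : Hom a b) (k : Hom a e) :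
  i ∘ h ∘ g ∘ f = k -> X ∘ i ∘ h ∘ g ∘ f = X ∘ k.
Proof. intros E; rewrite <- !comp_assoc, <- E, !comp_assoc; reflexivity. Qed.
Lemma L5 {a b c d e z w : V} (X : Hom z w) (j : Hom e z) (i : Hom d e) (h : Hom c d) (g : Hom b c) (f : Hom a b) (k : Hom a z) :
  j ∘ i ∘ h ∘ g ∘ f = k -> X ∘ j ∘ i ∘ h ∘ g ∘ f = X ∘ k.
Proof. intros E; rewrite <- !comp_assoc, <- E, !comp_assoc; reflexivity. Qed.

Lemma tid a b : (idm a) ⊗ (idm b) = idm (ten M a b).
Proof. apply tenf_id. Qed.
Lemma tc {a b c a' b' c' : V} (f : Hom a b) (g : Hom b c) (f' : Hom a' b') (g' : Hom b' c') :
  (g ∘ f) ⊗ (g' ∘ f') = (g ⊗ g') ∘ (f ⊗ f').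
Proof. apply tenf_comp. Qed.

Lemma tlr {a b c d : V} (f : Hom a b) (g : Hom c d) : (f ⊗ 1) ∘ (1 ⊗ g) = f ⊗ g.
Proof. rewrite <- tc, comp_id_l, comp_id_r; reflexivity. Qed.
Lemma trl {a b c d : V} (f : Hom a b) (g : Hom c d) : (1 ⊗ g) ∘ (f ⊗ 1) = f ⊗ g.
Proof. rewrite <- tc, comp_id_l, comp_id_r; reflexivity. Qed.
Lemma tll {a b c e : V} (f : Hom a b) (g : Hom b c) : (g ⊗ idm e) ∘ (f ⊗ 1) = (g ∘ f) ⊗ 1.
Proof. rewrite <- tc, comp_id_l; reflexivity. Qed.
Lemma trr {a b c e : V} (f : Hom a b) (g : Hom b c) : (idm e ⊗ g) ∘ (1 ⊗ f) = 1 ⊗ (g ∘ f).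
Proof. rewrite <- tc, comp_id_l; reflexivity. Qed.

Lemma tsl {a b c d e : V} (f : Hom a b) (g : Hom b c) (h : Hom d e) : (g ∘ f) ⊗ h = (g ⊗ h) ∘ (f ⊗ 1).
Proof. rewrite <- tc, cr; reflexivity. Qed.
Lemma tsl' {a b c d e : V} (f : Hom a b) (g : Hom b c) (h : Hom d e) : (g ∘ f) ⊗ h = (g ⊗ 1) ∘ (f ⊗ h).
Proof. rewrite <- tc, cl; reflexivity. Qed.
Lemma tsr {a b c d e : V} (f : Hom a b) (g : Hom b c) (h : Hom d e) : h ⊗ (g ∘ f) = (h ⊗ g) ∘ (1 ⊗ f).
Proof. rewrite <- tc, cr; reflexivity. Qed.
Lemma tsr' {a b c d e : V} (f : Hom a b) (g : Hom b c) (h : Hom d e) : h ⊗ (g ∘ f) = (1 ⊗ g) ∘ (h ⊗ f).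
Proof. rewrite <- tc, cl; reflexivity. Qed.
Lemma cong_r {a b c : V} (X Y : Hom b c) (s : Hom a b) : X = Y -> X ∘ s = Y ∘ s.
Proof. intros ->; reflexivity. Qed.
Lemma cong_l {a b c : V} (X Y : Hom a b) (s : Hom b c) : X = Y -> s ∘ X = s ∘ Y.
Proof. intros ->; reflexivity. Qed.
End Base.

Ltac norm := repeat rewrite ?comp_assoc, ?comp_id_l, ?comp_id_r.
Ltac rwL E := first [ rewrite (L2 _ _ _ _ E) | rewrite (L3 _ _ _ _ _ E)
          | rewrite (L4 _ _ _ _ _ _ E) | rewrite (L5 _ _ _ _ _ _ _ E) ].
Ltac rwA E := first [ rwL uconstr:(E _ _ _ _ _ _ _) | rwL uconstr:(E _ _ _ _ _ _)
  | rwL uconstr:(E _ _ _ _ _) | rwL uconstr:(E _ _ _ _) | rwL uconstr:(E _ _ _)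
  | rwL uconstr:(E _ _) | rwL uconstr:(E _) | rwL E ].
Ltac rw_ E := first [ rewrite E | rwA E ]; norm.
Tactic Notation "rw" uconstr(E) := rw_ E.
Ltac rwb_ E := first [ rewrite <- E
  | rwL uconstr:(eq_sym (E _ _ _ _ _ _ _)) | rwL uconstr:(eq_sym (E _ _ _ _ _ _))
  | rwL uconstr:(eq_sym (E _ _ _ _ _)) | rwL uconstr:(eq_sym (E _ _ _ _)) | rwL uconstr:(eq_sym (E _ _ _))
  | rwL uconstr:(eq_sym (E _ _)) | rwL uconstr:(eq_sym (E _)) | rwL uconstr:(eq_sym E) ]; norm.
Tactic Notation "rwb" uconstr(E) := rwb_ E.
Ltac normH E := repeat rewrite ?comp_assoc, ?comp_id_l, ?comp_id_r in E.

Section Mon.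
Context {V : Cat} {M : Monoidal V}.
Local Notation "f ⊗ g" := (tenf M f g) (at level 35).
Local Notation "1" := (idm _) : cat_scope.
Local Notation I := (unit M).
Local Notation α := (assoc M).
Local Notation α' := (assoc_inv M).
Local Notation λ := (lunit M).
Local Notation λ' := (lunit_inv M).
Local Notation ρ := (runit M).
Local Notation ρ' := (runit_inv M).

Lemma a_nat {a b c a' b' c' : V} (f : Hom a a') (g : Hom b b') (h : Hom c c') :
  α a' b' c' ∘ ((f ⊗ g) ⊗ h) = (f ⊗ (g ⊗ h)) ∘ α a b c.
Proof. apply assoc_nat. Qed.
Lemma l_nat {a b : V} (f : Hom a b) : f ∘ λ a = λ b ∘ (1 ⊗ f).
Proof. apply lunit_nat. Qed.
Lemma r_nat {a b : V} (f : Hom a b) : f ∘ ρ a = ρ b ∘ (f ⊗ 1).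
Proof. apply runit_nat. Qed.
Lemma aiso1 a b c : α' a b c ∘ α a b c = 1. Proof. apply assoc_iso1. Qed.
Lemma aiso2 a b c : α a b c ∘ α' a b c = 1. Proof. apply assoc_iso2. Qed.
Lemma liso1 a : λ' a ∘ λ a = 1. Proof. apply lunit_iso1. Qed.
Lemma liso2 a : λ a ∘ λ' a = 1. Proof. apply lunit_iso2. Qed.
Lemma riso1 a : ρ' a ∘ ρ a = 1. Proof. apply runit_iso1. Qed.
Lemma riso2 a : ρ a ∘ ρ' a = 1. Proof. apply runit_iso2. Qed.

Lemma inv_nat {a b c d : V} (i : Hom a b) (i' : Hom b a) (j : Hom c d) (j' : Hom d c)
  (F : Hom a c) (G : Hom b d) :
  i' ∘ i = 1 -> i ∘ i' = 1 -> j' ∘ j = 1 -> j ∘ j' = 1 ->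
  j ∘ F = G ∘ i -> j' ∘ G = F ∘ i'.
Proof.
  intros h1 h2 h3 h4 E.
  rewrite <- (cr (j' ∘ G)), <- h2, cA, <- (cA j' G i), <- E, cA, h3, cl; reflexivity.
Qed.

Lemma mono {a b c : V} (i : Hom b c) (i' : Hom c b) (f g : Hom a b) :
  i' ∘ i = 1 -> i ∘ f = i ∘ g -> f = g.
Proof. intros h E. rewrite <- (cl f), <- (cl g), <- h, <- !cA, E; reflexivity. Qed.
Lemma epi {a b c : V} (i : Hom a b) (i' : Hom b a) (f g : Hom b c) :
  i ∘ i' = 1 -> f ∘ i = g ∘ i -> f = g.
Proof. intros h E. rewrite <- (cr f), <- (cr g), <- h, !cA, E; reflexivity. Qed.

Lemma ai_nat {a b c a' b' c' : V} (f : Hom a a') (g : Hom b b') (h : Hom c c') :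
  α' a' b' c' ∘ (f ⊗ (g ⊗ h)) = ((f ⊗ g) ⊗ h) ∘ α' a b c.
Proof. apply (inv_nat (α a b c) _ (α a' b' c')); try apply assoc_iso1; try apply assoc_iso2. apply assoc_nat. Qed.
Lemma li_nat {a b : V} (f : Hom a b) : λ' b ∘ f = (1 ⊗ f) ∘ λ' a.
Proof. apply (inv_nat (λ a) _ (λ b)); try apply lunit_iso1; try apply lunit_iso2. symmetry; apply lunit_nat. Qed.
Lemma ri_nat {a b : V} (f : Hom a b) : ρ' b ∘ f = (f ⊗ 1) ∘ ρ' a.
Proof. apply (inv_nat (ρ a) _ (ρ b)); try apply runit_iso1; try apply runit_iso2. symmetry; apply runit_nat. Qed.

Lemma tI_inj {a b : V} (f g : Hom a b) : idm I ⊗ f = idm I ⊗ g -> f = g.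
Proof.
  intros E. apply (epi (λ a) (λ' a)); [apply lunit_iso2|].
  rewrite !lunit_nat, E; reflexivity.
Qed.
Lemma It_inj {a b : V} (f g : Hom a b) : f ⊗ idm I = g ⊗ idm I -> f = g.
Proof.
  intros E. apply (epi (ρ a) (ρ' a)); [apply runit_iso2|].
  rewrite !runit_nat, E; reflexivity.
Qed.

Lemma t_iso {a b c d : V} (f : Hom a b) (f' : Hom b a) (g : Hom c d) (g' : Hom d c) :
  f' ∘ f = 1 -> g' ∘ g = 1 -> (f' ⊗ g') ∘ (f ⊗ g) = 1.
Proof. intros h1 h2; rewrite <- tc, h1, h2, tid; reflexivity. Qed.

Lemma cmp_iso {a b c : V} (f : Hom a b) (f' : Hom b a) (g : Hom b c) (g' : Hom c b) :
  f ∘ f' = 1 -> g ∘ g' = 1 -> (g ∘ f) ∘ (f' ∘ g') = 1.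
Proof. intros h1 h2. rewrite <- cA, (cA f f' g'), h1, cl, h2; reflexivity. Qed.

Lemma triangle' (a b : V) : (1 ⊗ λ b) ∘ α a I b = ρ a ⊗ 1.
Proof. apply triangle. Qed.
Lemma pent (a b c d : V) :
  α a b (ten M c d) ∘ α (ten M a b) c d
  = (1 ⊗ α b c d) ∘ α a (ten M b c) d ∘ (α a b c ⊗ 1).
Proof. apply pentagon. Qed.

Lemma Kb (a b : V) : λ (ten M a b) ∘ α I a b = λ a ⊗ idm b.
Proof.
  apply tI_inj.
  apply (epi (α I (ten M I a) b ∘ (α I I a ⊗ 1)) ((α' I I a ⊗ 1) ∘ α' I (ten M I a) b)).
  { apply cmp_iso; [apply t_iso; [apply assoc_iso2 | apply cl] | apply assoc_iso2]. }
  rewrite <- trr. norm.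
  rw (eq_sym (pent I I a b)). rw triangle'.
  rw (eq_sym (a_nat (idm I) (λ a) (idm b))).
  rw tll. rw triangle'. rw a_nat. rewrite tid. reflexivity.
Qed.


Lemma tri_inv (a b : V) : (ρ a ⊗ 1) ∘ α' a I b = 1 ⊗ λ b.
Proof. rewrite <- triangle', <- cA, aiso2, cr; reflexivity. Qed.

Lemma Ka (a b : V) : ρ (ten M a b) = (1 ⊗ ρ b) ∘ α a b I.
Proof.
  apply It_inj. apply (mono (α a b I) (α' a b I)); [apply aiso1|].
  rewrite <- triangle', <- (tid a b).
  norm.   rw a_nat. rw pent. rw trr. rw triangle'. rwb a_nat. rw tll. reflexivity.
Qed.
Lemma Ka' (a b : V) : ρ (ten M a b) ∘ α' a b I = 1 ⊗ ρ b.
Proof. rewrite Ka, <- cA, aiso2, cr; reflexivity. Qed.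

Lemma Kc : λ I = ρ I.
Proof.
  symmetry. apply It_inj. apply (mono (λ I) (λ' I)); [apply liso1|].
  rewrite <- triangle'. norm. rwb l_nat. rw Kb. reflexivity.
Qed.

End Mon.

Section Br.
Context {V : Cat} {M : Monoidal V} {B : Braiding V M}.
Local Notation "f ⊗ g" := (tenf M f g) (at level 35).
Local Notation "1" := (idm _) : cat_scope.
Local Notation I := (unit M).
Local Notation α := (assoc M).
Local Notation α' := (assoc_inv M).
Local Notation λ := (lunit M).
Local Notation ρ := (runit M).
Local Notation σ := (braid B).
Local Notation σ' := (braid_inv _ _ B).

Lemma b_nat {a b a' b' : V} (f : Hom a a') (g : Hom b b') : (g ⊗ f) ∘ σ a b = σ a' b' ∘ (f ⊗ g).
Proof. apply braid_nat. Qed.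
Lemma biso1 a b : σ' a b ∘ σ a b = 1. Proof. apply braid_iso1. Qed.
Lemma biso2 a b : σ a b ∘ σ' a b = 1. Proof. apply braid_iso2. Qed.
Lemma bi_nat {a b a' b' : V} (f : Hom a a') (g : Hom b b') : (f ⊗ g) ∘ σ' a b = σ' a' b' ∘ (g ⊗ f).
Proof. symmetry. apply (inv_nat (σ a b) _ (σ a' b')); try apply biso1; try apply biso2. symmetry; apply b_nat. Qed.
Lemma hex1 a b c : α b c a ∘ σ a (ten M b c) ∘ α a b c = (1 ⊗ σ a c) ∘ α b a c ∘ (σ a b ⊗ 1).
Proof. apply hexagon1. Qed.
Lemma hex2 a b c : α' c a b ∘ σ (ten M a b) c ∘ α' a b c = (σ a c ⊗ 1) ∘ α' a c b ∘ (1 ⊗ σ b c).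
Proof. apply hexagon2. Qed.

Lemma K1 (a : V) : λ a ∘ σ a I = ρ a.
Proof.
  symmetry. apply (@It_inj _ M). apply (mono (σ a I) (σ' a I)); [apply biso1|].
  rewrite <- triangle'. norm. rwb b_nat. rewrite <- Kb. norm. rw hex1. rwb l_nat. rw Kb. rw tll. reflexivity.
Qed.

Lemma K2 (a : V) : ρ a ∘ σ I a = λ a.
Proof.
  symmetry. apply (@tI_inj _ M). apply (mono (σ I a) (σ' I a)); [apply biso1|].
  rewrite <- tri_inv. norm. rwb b_nat. rewrite <- Ka'. norm. rw hex2. rwb r_nat. rw Ka'. rw trr. reflexivity.
Qed.

End Br.

Section Ten.
Context {V : Cat} {M : Monoidal V} {B : Braiding V M}.
Local Notation "f ⊗ g" := (tenf M f g) (at level 35).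
Local Notation "x ⊗⊗ y" := (ten M x y) (at level 34, right associativity).
Local Notation "1" := (idm _) : cat_scope.
Local Notation I := (unit M).
Local Notation α := (assoc M).
Local Notation α' := (assoc_inv M).
Local Notation λ := (lunit M).
Local Notation ρ := (runit M).
Local Notation σ := (braid B).
Local Notation σ' := (braid_inv _ _ B).
Local Notation IC := (interchange M B).

Definition J a b c : Hom (a ⊗⊗ (b ⊗⊗ c)) (b ⊗⊗ (a ⊗⊗ c)) := α b a c ∘ (σ a b ⊗ 1) ∘ α' a b c.

Lemma I_def a a' b b' : IC a a' b b' = α' a b (a' ⊗⊗ b') ∘ (1 ⊗ J a' b b') ∘ α a a' (b ⊗⊗ b').
Proof. unfold interchange, J. norm. rw trr. rw trr. reflexivity. Qed.

Lemma J_nat {a b c a2 b2 c2 : V} (f : Hom a a2) (g : Hom b b2) (h : Hom c c2) :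
  J a2 b2 c2 ∘ (f ⊗ (g ⊗ h)) = (g ⊗ (f ⊗ h)) ∘ J a b c.
Proof. unfold J. norm. rw ai_nat. rwb tc. rwb b_nat. rw tsl. rw a_nat. reflexivity. Qed.

Lemma Pa a b c d : α a (b ⊗⊗ c) d ∘ (α a b c ⊗ 1) = (1 ⊗ α' b c d) ∘ α a b (c ⊗⊗ d) ∘ α (a ⊗⊗ b) c d.
Proof. rw pent. rw trr. rewrite aiso1, tid. norm. reflexivity. Qed.
Lemma Pc a b c d : α (a ⊗⊗ b) c d ∘ (α' a b c ⊗ 1) = α' a b (c ⊗⊗ d) ∘ (1 ⊗ α b c d) ∘ α a (b ⊗⊗ c) d.
Proof.
  apply (mono (α a b (c ⊗⊗ d)) (α' a b (c ⊗⊗ d))); [apply aiso1|]. norm.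
  rw pent. rw tll. rewrite aiso2, tid. norm. rw aiso2. reflexivity.
Qed.
Lemma Pd a b c d : α a (b ⊗⊗ c) d ∘ (α a b c ⊗ 1) ∘ α' (a ⊗⊗ b) c d = (1 ⊗ α' b c d) ∘ α a b (c ⊗⊗ d).
Proof. rw Pa. rw aiso2. reflexivity. Qed.
Lemma Pe a b c d : α (a ⊗⊗ b) c d ∘ (α' a b c ⊗ 1) ∘ α' a (b ⊗⊗ c) d = α' a b (c ⊗⊗ d) ∘ (1 ⊗ α b c d).
Proof. rw Pc. rw aiso2. reflexivity. Qed.
Lemma Pb a b c d : α (a ⊗⊗ b) c d ∘ (α' a b c ⊗ 1) ∘ α' a (b ⊗⊗ c) d ∘ (1 ⊗ α' b c d) = α' a b (c ⊗⊗ d).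
Proof. rw Pe. rw trr. rewrite aiso2, tid. norm. reflexivity. Qed.

Lemma JA a b c d :
  α b (a ⊗⊗ c) d ∘ (J a b c ⊗ 1) ∘ α' a (b ⊗⊗ c) d ∘ (1 ⊗ α' b c d) = (1 ⊗ α' a c d) ∘ J a b (c ⊗⊗ d).
Proof.
  unfold J. norm. rw tsl. rw tsl. rw Pa. rw a_nat. rewrite tid. rw Pb. reflexivity.
Qed.

Lemma HX1 a b b' : σ a (b ⊗⊗ b') = α' b b' a ∘ (1 ⊗ σ a b') ∘ α b a b' ∘ (σ a b ⊗ 1) ∘ α' a b b'.
Proof. rwb hex1. rw aiso1. rw aiso2. reflexivity. Qed.
Lemma HX2 a a' b : σ (a ⊗⊗ a') b = α b a a' ∘ (σ a b ⊗ 1) ∘ α' a b a' ∘ (1 ⊗ σ a' b) ∘ α a a' b.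
Proof. rwb hex2. rw aiso2. rw aiso1. reflexivity. Qed.

Lemma HJ1 a b b' c : J a (b ⊗⊗ b') c = α' b b' (a ⊗⊗ c) ∘ (1 ⊗ J a b' c) ∘ J a b (b' ⊗⊗ c) ∘ (1 ⊗ α b b' c).
Proof.
  unfold J. rewrite HX1. norm. rw tsl. rw tsl. rw tsl. rw tsl.
  rw Pc. rw a_nat. rw Pa. rw a_nat. rewrite tid. rw Pe.
  repeat rw tsr. reflexivity.
Qed.

Lemma HJ2 a a' b c : J (a ⊗⊗ a') b c = (1 ⊗ α' a a' c) ∘ J a b (a' ⊗⊗ c) ∘ (1 ⊗ J a' b c) ∘ α a a' (b ⊗⊗ c).
Proof.
  unfold J. rewrite HX2. norm. rw tsl. rw tsl. rw tsl. rw tsl.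
  rw Pa. rw a_nat. rewrite tid. rw Pc. rw a_nat. rw Pd.
  repeat rw tsr. reflexivity.
Qed.

Lemma Psi a a' a'' b b' b'' :
  α (a ⊗⊗ b) (a' ⊗⊗ b') (a'' ⊗⊗ b'') ∘ (IC a a' b b' ⊗ 1) ∘ IC (a ⊗⊗ a') a'' (b ⊗⊗ b') b''
  = (1 ⊗ IC a' a'' b' b'') ∘ IC a (a' ⊗⊗ a'') b (b' ⊗⊗ b'') ∘ (α a a' a'' ⊗ α b b' b'').
Proof.
  rewrite !I_def. norm.
  rw tsl. rw tsl. rw Pc. rw a_nat. rw Pd. rewrite <- (tid a a'). rw a_nat. rw pent.
  rewrite <- (tid a b). rwb ai_nat. rewrite <- (trl (α a a' a'') (α b b' b'')). norm. rewrite <- (tid a (a' ⊗⊗ a'')). rw a_nat.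
  repeat rw trr. f_equal. f_equal. f_equal.
  rewrite HJ1, HJ2. norm. rewrite <- (tid a' a''). rw a_nat.
  f_equal. repeat rw tsr. apply cong_r. apply cong_r. apply cong_r.
  rw (trr (α' a' a'' (b' ⊗⊗ b'')) (α a' a'' (b' ⊗⊗ b''))). rewrite aiso2, tid. norm.
  rwb J_nat. apply cong_r. rw JA. reflexivity.
Qed.

Lemma IC_nat {a a' b b' a2 a2' b2 b2' : V} (f : Hom a a2) (f' : Hom a' a2') (g : Hom b b2) (g' : Hom b' b2') :
  IC a2 a2' b2 b2' ∘ ((f ⊗ f') ⊗ (g ⊗ g')) = ((f ⊗ g) ⊗ (f' ⊗ g')) ∘ IC a a' b b'.
Proof.
  rewrite !I_def. norm. rw a_nat. rwb tc. rw J_nat. rw tsr. rw ai_nat. reflexivity.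
Qed.

Lemma KR A Bo : ρ (A ⊗⊗ Bo) ∘ (1 ⊗ λ I) ∘ IC A I Bo I = ρ A ⊗ ρ Bo.
Proof.
  rewrite I_def, Kc. norm. rewrite <- (tid A Bo). rwb ai_nat. rw Ka'. repeat rw trr.
  unfold J. norm. rwb Ka. rwb r_nat. rw K2. rw Ka'. rwb l_nat.
  rw tsr. rw triangle'. rw trl. reflexivity.
Qed.

Lemma KL A Bo : λ (A ⊗⊗ Bo) ∘ (λ I ⊗ 1) ∘ IC I A I Bo = λ A ⊗ λ Bo.
Proof.
  rewrite I_def, Kc. norm. rw tri_inv. rwb l_nat. rwb l_nat.
  unfold J. norm. rw Kb. rw tll. rw K1. rw tri_inv. rw l_nat. rwb a_nat. rewrite tid. rw Kb. rw tlr. reflexivity.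
Qed.

End Ten.

Section Conv.
Context {V : Cat} {M : Monoidal V} {X : Type} (A : VCat M X).
Local Notation "f ⊗ g" := (tenf M f g) (at level 35).
Local Notation "x ⊗⊗ y" := (ten M x y) (at level 34, right associativity).
Local Notation "1" := (idm _) : cat_scope.
Local Notation I := (unit M).
Local Notation α := (assoc M).
Local Notation λ := (lunit M).
Local Notation ρ := (runit M).
Local Notation m := (mult A).
Local Notation u := (unt A).

Context (D : V) (dD : Hom D (D ⊗⊗ D)) (eD : Hom D I)
  (coas : α D D D ∘ (dD ⊗ 1) ∘ dD = (1 ⊗ dD) ∘ dD)
  (cuL : λ D ∘ (eD ⊗ 1) ∘ dD = 1)
  (cuR : ρ D ∘ (1 ⊗ eD) ∘ dD = 1).

Definition conv {p q r} (f : Hom D (hom A p q)) (g : Hom D (hom A q r)) : Hom D (hom A p r) :=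
  m p q r ∘ (f ⊗ g) ∘ dD.

Lemma massoc x y z w : m x z w ∘ (m x y z ⊗ 1) = m x y w ∘ (1 ⊗ m y z w) ∘ α _ _ _.
Proof. apply mult_assoc. Qed.
Lemma munl x y : m x x y ∘ (u x ⊗ 1) = λ _. Proof. apply unt_l. Qed.
Lemma munr x y : m x y y ∘ (1 ⊗ u y) = ρ _. Proof. apply unt_r. Qed.

Lemma conv_assoc {p q r s} (f : Hom D (hom A p q)) (g : Hom D (hom A q r)) (h : Hom D (hom A r s)) :
  conv (conv f g) h = conv f (conv g h).
Proof.
  unfold conv. norm. rewrite (tsl dD (m p q r ∘ (f ⊗ g)) h), (tsl' (f ⊗ g) (m p q r) h). norm.
  rw massoc. rw a_nat. rw coas.
  rewrite (tsr dD (m q r s ∘ (g ⊗ h)) f), (tsr' (g ⊗ h) (m q r s) f). norm. reflexivity.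
Qed.

Lemma conv_unit_r {p q} (f : Hom D (hom A p q)) : conv f (u q ∘ eD) = f.
Proof.
  unfold conv. rewrite (tsr' eD (u q) f). norm. rw munr. rewrite <- (tlr f eD). norm.
  rwb r_nat. rw cuR. reflexivity.
Qed.

Lemma conv_unit_l {p q} (f : Hom D (hom A p q)) : conv (u p ∘ eD) f = f.
Proof.
  unfold conv. rewrite (tsl' eD (u p) f). norm. rw munl. rewrite <- (trl eD f). norm.
  rwb l_nat. rw cuL. reflexivity.
Qed.

End Conv.

Section Hopf.
Context {V : Cat} {M : Monoidal V} {B : Braiding V M} {X : Type} (H : Hopf M B X).
Local Notation "f ⊗ g" := (tenf M f g) (at level 35).
Local Notation "x ⊗⊗ y" := (ten M x y) (at level 34, right associativity).
Local Notation "1" := (idm _) : cat_scope.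
Local Notation I := (unit M).
Local Notation α := (assoc M).
Local Notation α' := (assoc_inv M).
Local Notation λ := (lunit M).
Local Notation ρ := (runit M).
Local Notation σ := (braid B).
Local Notation σ' := (braid_inv _ _ B).
Local Notation IC := (interchange M B).
Local Notation h := (hom H).
Local Notation m := (mult H).
Local Notation u := (unt H).
Local Notation Δ := (comult H).
Local Notation ε := (counit H).
Local Notation S := (antipode H).

Lemma coas x y : α _ _ _ ∘ (Δ x y ⊗ 1) ∘ Δ x y = (1 ⊗ Δ x y) ∘ Δ x y.
Proof. destruct (comonoid_ax _ _ _ H x y) as [E _]. exact E. Qed.
Lemma cuL x y : λ _ ∘ (ε x y ⊗ 1) ∘ Δ x y = 1.
Proof. destruct (comonoid_ax _ _ _ H x y) as [_ [E _]]. exact E. Qed.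
Lemma cuR x y : ρ _ ∘ (1 ⊗ ε x y) ∘ Δ x y = 1.
Proof. destruct (comonoid_ax _ _ _ H x y) as [_ [_ E]]. exact E. Qed.
Lemma mD x y z : Δ x z ∘ m x y z = (m x y z ⊗ m x y z) ∘ IC _ _ _ _ ∘ (Δ x y ⊗ Δ y z).
Proof. destruct (mult_comonoid_morphism _ _ _ H x y z) as [E _]. rewrite E. unfold ten_comult. norm. reflexivity. Qed.
Lemma mE x y z : ε x z ∘ m x y z = λ I ∘ (ε x y ⊗ ε y z).
Proof. destruct (mult_comonoid_morphism _ _ _ H x y z) as [_ E]. exact E. Qed.
Lemma uE x : ε x x ∘ u x = 1.
Proof. destruct (unt_comonoid_morphism _ _ _ H x) as [_ E]. exact E. Qed.
Lemma antl x y : m x y x ∘ (1 ⊗ S x y) ∘ Δ x y = u x ∘ ε x y.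
Proof. apply antipode_l. Qed.
Lemma antr x y : m y x y ∘ (S x y ⊗ 1) ∘ Δ x y = u y ∘ ε x y.
Proof. apply antipode_r. Qed.
Lemma mas x y z w : m x z w ∘ (m x y z ⊗ 1) = m x y w ∘ (1 ⊗ m y z w) ∘ α _ _ _.
Proof. apply mult_assoc. Qed.
Lemma mul x y : m x x y ∘ (u x ⊗ 1) = λ _. Proof. apply unt_l. Qed.
Lemma mur x y : m x y y ∘ (1 ⊗ u y) = ρ _. Proof. apply unt_r. Qed.

Lemma eS x y : ε y x ∘ S x y = ε x y.
Proof.
  assert (E := f_equal (fun k => ε x x ∘ k) (antl x y)). simpl in E. normH E.
  rewrite uE in E. normH E. rewrite <- E. rw mE. rwb tc. rewrite <- (trl (ε x y) (ε y x ∘ S x y)). norm. rwb l_nat. rw cuL. reflexivity.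
Qed.

Definition dD x y z : Hom (h x y ⊗⊗ h y z) ((h x y ⊗⊗ h y z) ⊗⊗ (h x y ⊗⊗ h y z)) :=
  IC _ _ _ _ ∘ (Δ x y ⊗ Δ y z).
Definition eD x y z : Hom (h x y ⊗⊗ h y z) I := λ I ∘ (ε x y ⊗ ε y z).

Lemma D_cuR x y z : ρ _ ∘ (1 ⊗ eD x y z) ∘ dD x y z = 1.
Proof.
  unfold dD, eD. norm. rw tsr. rewrite <- (tid (h x y) (h y z)). rwb IC_nat. rewrite tid.
  rw KR. rwb tc. rwb tc. rw cuR. rw cuR. apply tid.
Qed.
Lemma D_cuL x y z : λ _ ∘ (eD x y z ⊗ 1) ∘ dD x y z = 1.
Proof.
  unfold dD, eD. norm. rw tsl. rewrite <- (tid (h x y) (h y z)). rwb IC_nat. rewrite tid.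
  rw KL. rwb tc. rwb tc. rw cuL. rw cuL. apply tid.
Qed.

Lemma coas' x y : (Δ x y ⊗ 1) ∘ Δ x y = α' _ _ _ ∘ (1 ⊗ Δ x y) ∘ Δ x y.
Proof. rwb coas. rw aiso1. reflexivity. Qed.

Lemma D_coas x y z : α _ _ _ ∘ (dD x y z ⊗ 1) ∘ dD x y z = (1 ⊗ dD x y z) ∘ dD x y z.
Proof.
  unfold dD. norm. rewrite (tsl (Δ x y ⊗ Δ y z) (IC _ _ _ _)). rewrite (tsr (Δ x y ⊗ Δ y z) (IC _ _ _ _)).
  norm. rewrite <- (tid (h x y) (h y z)). rwb IC_nat. rwb IC_nat. rewrite !tid.
  rwb tc. rwb tc. rewrite !coas'. rewrite (tc (Δ x y) (α' _ _ _ ∘ (1 ⊗ Δ x y))). rewrite (tc (1 ⊗ Δ x y) (α' _ _ _)).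
  norm. rw Psi. rwb (tc (α' _ _ _) (α _ _ _) (α' _ _ _) (α _ _ _)). rewrite !aiso2, tid. norm. rwb tc. reflexivity.
Qed.

Lemma mas' x y z w : m x y w ∘ (1 ⊗ m y z w) = m x z w ∘ (m x y z ⊗ 1) ∘ α' _ _ _.
Proof. rw mas. rw aiso2. reflexivity. Qed.

Lemma L_ba x y z : conv H _ (dD x y z) (S x z ∘ m x y z) (m x y z) = u z ∘ eD x y z.
Proof.
  unfold conv. rewrite (tsl' (m x y z) (S x z) (m x y z)). unfold dD, eD. norm. rwb mD. rw antr. rw mE. reflexivity.
Qed.

Lemma L_ac x y z : conv H _ (dD x y z) (m x y z) (m z y x ∘ (S y z ⊗ S x y) ∘ σ _ _) = u x ∘ eD x y z.
Proof.
  unfold conv, dD, eD. norm.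
  rw tsr. rw tsr. rewrite <- (tlr (m x y z) (m z y x)). norm.
  rw mas. rewrite <- (tid (h x y) (h y z)). rw a_nat. rw a_nat. rw a_nat. rewrite I_def. norm. rw aiso2.
  repeat rw trr. rewrite (tsr (σ (h x y) (h y z)) (m z y x ∘ (S y z ⊗ S x y)) (idm (h y z))), (tsr (S y z ⊗ S x y) (m z y x) (idm (h y z))). norm. rw mas'. unfold J. norm. rwb hex1. rw aiso2. rw ai_nat. rw aiso1.
  rewrite <- (trl (Δ x y) (Δ y z)), <- (tid (h x y) (h x y)). norm. rw a_nat. rw trr.
  rwb b_nat. rwb tc. rwb tc. rw antl. rw tsl'. rw mul.
  rewrite <- (trl (ε y z) (S x y)). norm. rwb l_nat. rw b_nat. rw K1.
  rw tsr. rw tsr. rwb a_nat. rewrite tid. rwb Ka. rw trl. rewrite <- (tlr (Δ x y) (ε y z)). norm.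
  rwb r_nat. rw antl. rw (r_nat (ε x y)). rw tlr. rewrite Kc. reflexivity.
Qed.

Lemma antimult x y z : S x z ∘ m x y z = m z y x ∘ (S y z ⊗ S x y) ∘ σ (h x y) (h y z).
Proof.
  rewrite <- (conv_unit_r H _ (dD x y z) (eD x y z) (D_cuR x y z) (S x z ∘ m x y z)).
  rewrite <- (L_ac x y z).
  rewrite <- (conv_assoc H _ (dD x y z) (D_coas x y z)).
  rewrite L_ba.
  apply (conv_unit_l H _ (dD x y z) (eD x y z) (D_cuL x y z)).
Qed.

End Hopf.

Section Main.
Context {V : Cat} {M : Monoidal V} {B : Braiding V M} {X : Type} (H : Hopf M B X).
Local Notation "f ⊗ g" := (tenf M f g) (at level 35).
Local Notation "1" := (idm _) : cat_scope.
Local Notation λ := (lunit M).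
Local Notation ρ := (runit M).
Local Notation σ := (braid B).
Local Notation σ' := (braid_inv _ _ B).
Local Notation h := (hom H).
Local Notation m := (mult H).
Local Notation ε := (counit H).
Local Notation S := (antipode H).

Lemma antimult' x y z : m z y x ∘ (S y z ⊗ S x y) = S x z ∘ m x y z ∘ σ' (h x y) (h y z).
Proof. rw antimult. rw biso2. reflexivity. Qed.

Lemma K1' (a : V) : ρ a ∘ σ' a (unit M) = λ a.
Proof. rewrite <- (@K1 _ _ B). norm. rw biso2. reflexivity. Qed.

Lemma cone1 (x : X) (Rx : V) (tauR : forall y, Hom Rx (h x y))
  (hR : right_integral_cone H x Rx tauR) (Sinv : invertible_antipode H) :
  left_integral_cone H x Rx (fun y => S x y ∘ tauR y).
Proof.
  intros x0 y. destruct (Sinv y x0) as [T [T1 T2]].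
  apply (epi (S y x0 ⊗ idm Rx) (T ⊗ idm Rx)); [rewrite <- tc, T2, cl, tid; reflexivity|].
  norm. rw trl. rewrite (tsr (tauR y) (S x y) (S y x0)). norm. rw antimult'.
  rwb bi_nat. rw hR. rewrite <- (tlr (tauR x0) (ε y x0)). norm. rwb r_nat. rw bi_nat. rw K1'.
  rwb tc. rw eS. rewrite <- (trl (ε y x0) (S x x0 ∘ tauR x0)). norm. rwb l_nat. reflexivity.
Qed.

Lemma cone2 (x : X) (Lx : V) (tauL : forall y, Hom Lx (h y x))
  (hL : left_integral_cone H x Lx tauL) (T : forall x y, Hom (h y x) (h x y))
  (T1 : forall x y, T x y ∘ S x y = 1) (T2 : forall x y, S x y ∘ T x y = 1) :
  right_integral_cone H x Lx (fun y => T x y ∘ tauL y).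
Proof.
  intros z y. apply (mono (S x y) (T x y)); [apply T1|].
  norm. rw antimult. rwb b_nat. rwb tc. rw T2. rewrite <- (trl (S z y) (tauL z)). norm.
  rw hL. rwb tc. rw eS. rewrite <- (trl (ε z y) (tauL y)). norm. rwb l_nat. rw b_nat. rw K1.
  rewrite <- (tlr (T x y ∘ tauL y) (ε z y)). norm. rwb r_nat. rw T2. reflexivity.
Qed.

End Main.

Theorem mainTheorem4 (V : Cat) (M : Monoidal V) (B : Braiding V M)
    (Cl : Closed V M) (X : Type) (H : Hopf M B X)
    (Hinv : invertible_antipode H) (x : X)
    (Rx : V) (tauR : forall y, Hom Rx (hom H x y))
    (HR : is_right_integral_space H x Rx tauR)
    (Lx : V) (tauL : forall y, Hom Lx (hom H y x))
    (HL : is_left_integral_space H x Lx tauL) :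
  isomorphic Rx Lx.
Proof.
  set (T := fun x y => proj1_sig (constructive_indefinite_description _ (Hinv x y))).
  assert (T1 : forall x y, T x y ∘ antipode H x y = idm _).
  { intros a b. unfold T. destruct (constructive_indefinite_description _ (Hinv a b)) as [g [g1 g2]]. exact g1. }
  assert (T2 : forall x y, antipode H x y ∘ T x y = idm _).
  { intros a b. unfold T. destruct (constructive_indefinite_description _ (Hinv a b)) as [g [g1 g2]]. exact g2. }
  clearbody T.
  destruct HR as [hR uR]. destruct HL as [hL uL].
  destruct (uL Rx _ (cone1 H x Rx tauR hR Hinv)) as [phi [phiE _]].
  destruct (uR Lx _ (cone2 H x Lx tauL hL T T1 T2)) as [psi [psiE _]].
  exists phi, psi. split.
  - destruct (uR Rx tauR hR) as [u0 [_ u0U]].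
    rewrite (u0U (psi ∘ phi)), (u0U (idm _)); [reflexivity| |].
    + intros y. apply cr.
    + intros y. rewrite cA, psiE, <- cA, phiE, cA, T1, cl. reflexivity.
  - destruct (uL Lx tauL hL) as [u0 [_ u0U]].
    rewrite (u0U (phi ∘ psi)), (u0U (idm _)); [reflexivity| |].
    + intros y. apply cr.
    + intros y. rewrite cA, phiE, <- cA, psiE, cA, T2, cl. reflexivity.
Qed.
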